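(* Let $f_1,\dots,f_k\in\mathbb{K}[\mathbf{x}]$ be nonzero multihomogeneous polynomials, $<$ a monomial order, and $\mathbf{d}\in\mathbb{Z}^r$ such that $[H_1^k]_{\mathbf{d}}=0$. Then, in the matrix $\mathrm{M_3H}(\{f_1,\dots,f_k\},\mathbf{d},<)$, every row of the form $\mathbf{x}^\beta\cdot f_k$ is linearly independent of the other rows (it is not a linear combination of them).
   Context: $\mathbb{K}$ is a field of characteristic $0$; $\mathbb{K}[\mathbf{x}]$ is the polynomial ring in variables $x_{i,0},\dots,x_{i,n_i}$ ($1\le i\le r$), $\mathbb{Z}^r$-graded with $x_{i,j}$ of degree the $i$-th standard basis vector; $[\,\cdot\,]_{\mathbf{d}}$ denotes multidegree-$\mathbf{d}$ parts (zero if $\mathbf{d}$ has a negative coordinate). $H_1^k:=H_1(\mathcal{K}_\bullet(f_1,\dots,f_k;\mathbb{K}[\mathbf{x}]))$ is the first homology of the Koszul complex of $f_1,\dots,f_k$ over $\mathbb{K}[\mathbf{x}]$, with its multigrading. A Macaulay matrix has columns indexed by monomials and rows representing polynomials (entry = coefficient). The procedure $\mathrm{M_3H}(\{f_1,\dots,f_k\},\mathbf{d},<)$ returns a Macaulay matrix with columns the monomials of $\mathbb{K}[\mathbf{x}]_{\mathbf{d}}$ in decreasing order for $<$, defined recursively: if $k=1$, start from the empty matrix and $\mathfrak{L}=\emptyset$; if $k>1$, start from $\mathrm{M_3H}(\{f_1,\dots,f_{k-1}\},\mathbf{d},<)$ and let $\mathfrak{L}$ be the set of leading monomials of the nonzero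 rows of the Gaussian elimination of $\mathrm{M_3H}(\{f_1,\dots,f_{k-1}\},\mathbf{d}-\deg(f_k),<)$. Then append the row $\mathbf{x}^\beta f_k$ for every monomial $\mathbf{x}^\beta\in\mathbb{K}[\mathbf{x}]_{\mathbf{d}-\deg(f_k)}\setminus\mathfrak{L}$. *)

(* Defs.v *)
From HB Require Import structures.
From mathcomp Require Import all_boot all_order all_algebra.
From mathcomp Require Import mpoly.
From Stdlib Require Import ClassicalEpsilon.

Set Implicit Arguments.
Unset Strict Implicit.
Unset Printing Implicit Defensive.

Import Order.TTheory GRing.Theory Num.Theory.
Local Open Scope ring_scope.

Section M3H.

(* K : the coefficient field; N : total number of variables;
   r : number of blocks; blk v : the block i to which variable v = x_{i,j}
   belongs.  The Z^r-grading gives x_v degree e_(blk v). *)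
Variables (K : fieldType) (N r : nat) (blk : 'I_N -> 'I_r).

Definition mdegv (m : 'X_{1..N}) : 'I_r -> int :=
  fun i => (\sum_(v < N | blk v == i) m v)%N%:Z.

(* p lies in K[x]_e (the zero polynomial lies in every K[x]_e, including
   when e has a negative coordinate, where K[x]_e = 0) *)
Definition mhomog (e : 'I_r -> int) (p : {mpoly K[N]}) : Prop :=
  forall m, m \in msupp p -> forall i, mdegv m i = e i.

Definition pdeg (p : {mpoly K[N]}) : 'I_r -> int := mdegv (mlead p).

Definition subv (d e : 'I_r -> int) : 'I_r -> int := fun i => d i - e i.

Definition monos (e : 'I_r -> int) : seq 'X_{1..N} :=
  [seq val m | m <- enum {: bmultinom N (\sum_(i < r) `|e i|).+1}
             & [forall i, mdegv (val m) i == e i]].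

Definition monomial_order (lt : rel 'X_{1..N}) : Prop :=
  [/\ irreflexive lt,
      transitive lt,
      (forall a b, a != b -> lt a b || lt b a),
      (forall a b c, lt a b -> lt (a + c)%MM (b + c)%MM) &
      (forall a, a != 0%MM -> lt 0%MM a)].

Definition is_LM (lt : rel 'X_{1..N}) (p : {mpoly K[N]}) (m : 'X_{1..N}) :=
  m \in msupp p /\ forall m', m' \in msupp p -> m' != m -> lt m' m.

Definition in_span (rows : seq {mpoly K[N]}) (p : {mpoly K[N]}) : Prop :=
  exists c : 'I_(size rows) -> K, p = \sum_(j < size rows) c j *: rows`_j.

(* Leading monomials of the nonzero rows of a Gaussian elimination
   (row echelon form) of the matrix with rows [rows]: these are exactly the
   leading monomials of the nonzero polynomials of the row space. *)
Definition LMset (lt : rel 'X_{1..N}) (rows : seq {mpoly K[N]})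
  (m : 'X_{1..N}) : Prop :=
  exists p, [/\ in_span rows p, p != 0 & is_LM lt p m].

Definition decide (P : Prop) : bool :=
  if excluded_middle_informative P then true else false.

(* M3H(fs, d, <) as the list of its rows (each row = a polynomial of
   K[x]_d, its coefficient vector on the monomial columns of K[x]_d).
   Recursion on the last polynomial: M3H(rcons fs f) =
   M3H(fs) followed by the rows x^b f, for x^b in K[x]_(d - deg f) \ L,
   L = leading monomials of the Gaussian elimination of M3H(fs, d - deg f). *)
Fixpoint M3H_rev (lt : rel 'X_{1..N}) (rfs : seq {mpoly K[N]})
  (d : 'I_r -> int) {struct rfs} : seq {mpoly K[N]} :=
  match rfs with
  | [::] => [::]
  | f :: rfs' =>
      M3H_rev lt rfs' d ++
      [seq 'X_[b] * f | b <- monos (subv d (pdeg f)) &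
         ~~ decide (LMset lt (M3H_rev lt rfs' (subv d (pdeg f))) b)]
  end.

Definition M3H (fs : seq {mpoly K[N]}) (d : 'I_r -> int) (lt : rel 'X_{1..N})
  : seq {mpoly K[N]} := M3H_rev lt (rev fs) d.

(* [H_1(K(f_1..f_k))]_d = 0: every syzygy (g_1..g_k), g_i in
   K[x]_(d - deg f_i), with sum g_i f_i = 0, is a Koszul syzygy, i.e. in the
   image of K_2 -> K_1, e_i /\ e_j |-> f_i e_j - f_j e_i. *)
Definition H1_vanishes (fs : seq {mpoly K[N]}) (d : 'I_r -> int) : Prop :=
  forall g : 'I_(size fs) -> {mpoly K[N]},
    (forall i : 'I_(size fs), mhomog (subv d (pdeg fs`_i)) (g i)) ->
    \sum_(i < size fs) g i * fs`_i = 0 ->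
    exists h : 'I_(size fs) -> 'I_(size fs) -> {mpoly K[N]},
      [/\ forall i, h i i = 0,
          forall i j, h i j = - h j i &
          forall j, g j = \sum_(i < size fs) h i j * fs`_i].

Definition row_indep_of_others (rows : seq {mpoly K[N]}) (i : nat) : Prop :=
  ~ exists c : 'I_(size rows) -> K,
      rows`_i = \sum_(j < size rows | val j != i) c j *: rows`_j.

End M3H.

(* Main.v *)
Require Import Defs.
From HB Require Import structures.
From mathcomp Require Import all_boot all_order all_algebra.
From mathcomp Require Import mpoly.
From Stdlib Require Import ClassicalEpsilon.
Import GRing.Theory.
Local Open Scope ring_scope.

Set Implicit Arguments.
Unset Strict Implicit.
Unset Printing Implicit Defensive.

Section Aux.
Variables (K : fieldType) (N r : nat) (blk : 'I_N -> 'I_r).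
Local Notation poly := {mpoly K[N]}.
Local Notation hom := (@mhomog K N r blk).
Local Notation mdv := (@mdegv N r blk).

Definition anti (e : 'I_r -> int) (p : poly) :=
  forall m, (forall i, mdv m i = e i) -> p@_m = 0.

Lemma mdegvD m1 m2 i : mdv (m1 + m2)%MM i = mdv m1 i + mdv m2 i.
Proof.
by rewrite /mdegv -PoszD -big_split /=; congr Posz; apply: eq_bigr => v _; rewrite mnmDE.
Qed.

Lemma hom0 e : hom e 0.
Proof. by move=> m; rewrite msupp0. Qed.

Lemma homD e p q : hom e p -> hom e q -> hom e (p + q).
Proof.
by move=> hp hq m /msuppD_le; rewrite mem_cat => /orP[/hp|/hq].
Qed.

Lemma homZ e c p : hom e p -> hom e (c *: p).
Proof. by move=> hp m /msuppZ_le /hp. Qed.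

Lemma homN e p : hom e p -> hom e (- p).
Proof. by move=> hp; rewrite -scaleN1r; apply: homZ. Qed.

Lemma homB e p q : hom e p -> hom e q -> hom e (p - q).
Proof. by move=> hp hq; apply: homD => //; apply: homN. Qed.

Lemma hom_sum e (I : Type) (s : seq I) (P : pred I) (F : I -> poly) :
  (forall i, P i -> hom e (F i)) -> hom e (\sum_(i <- s | P i) F i).
Proof.
move=> H; elim/big_ind: _ => //; [exact: hom0 | exact: homD].
Qed.

Lemma homX e m : (forall i, mdv m i = e i) -> hom e 'X_[m].
Proof. by move=> H m'; rewrite msuppX inE => /eqP ->. Qed.

Lemma homM e e1 e2 p q : hom e1 p -> hom e2 q ->
  (forall i, e i = e1 i + e2 i) -> hom e (p * q).
Proof.
move=> hp hq he m /msuppM_le /allpairsP [[m1 m2] [/= h1 h2 ->]] i.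
by rewrite mdegvD (hp _ h1) (hq _ h2) he.
Qed.

Lemma anti0 e : anti e 0.
Proof. by move=> m _; rewrite mcoeff0. Qed.

Lemma antiD e p q : anti e p -> anti e q -> anti e (p + q).
Proof. by move=> hp hq m hm; rewrite mcoeffD hp // hq // addr0. Qed.

Lemma antiZ e c p : anti e p -> anti e (c *: p).
Proof. by move=> hp m hm; rewrite mcoeffZ hp // mulr0. Qed.

Lemma antiN e p : anti e p -> anti e (- p).
Proof. by move=> hp m hm; rewrite mcoeffN hp // oppr0. Qed.

Lemma anti_sum e (I : Type) (s : seq I) (P : pred I) (F : I -> poly) :
  (forall i, P i -> anti e (F i)) -> anti e (\sum_(i <- s | P i) F i).
Proof.
move=> H; elim/big_ind: _ => //; [exact: anti0 | exact: antiD].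
Qed.

Lemma antiM e e1 e2 p q : anti e1 p -> hom e2 q ->
  (forall i, e i = e1 i + e2 i) -> anti e (p * q).
Proof.
move=> hp hq he m hm; apply/eqP; rewrite mcoeff_eq0; apply/negP.
move=> /msuppM_le /allpairsP [[m1 m2] [/= h1 h2 Em]].
move: h1; rewrite mcoeff_msupp hp ?eqxx // => i.
by have := hm i; rewrite Em mdegvD (hq _ h2) he => /addIr.
Qed.

Lemma hom_anti0 e p : hom e p -> anti e p -> p = 0.
Proof.
move=> hp ha; apply/eqP; rewrite -msupp_eq0; case E: (msupp p) => [//|m s].
have mi : m \in msupp p by rewrite E inE eqxx.
by move: (mi); rewrite mcoeff_msupp ha ?eqxx // => i; apply: hp.
Qed.


Lemma mem_monos e m : (m \in monos blk e) = [forall i, mdv m i == e i].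
Proof.
apply/idP/idP.
  by case/mapP => bm; rewrite mem_filter => /andP[H _] ->.
move=> H.
have hb : (mdeg m < (\sum_(i < r) `|e i|).+1)%N.
  rewrite ltnS mdegE (partition_big blk xpredT) //= leq_eqVlt; apply/orP; left.
  apply/eqP; apply: eq_bigr => i _; have := eqP (forallP H i).
  by rewrite /mdegv => <-.
by apply/mapP; exists (BMultinom hb) => //; rewrite mem_filter H mem_enum.
Qed.

Lemma mem_monosP e m : m \in monos blk e -> forall i, mdv m i = e i.
Proof. by rewrite mem_monos => /forallP H i; apply/eqP. Qed.

Lemma mem_monosI e m : (forall i, mdv m i = e i) -> m \in monos blk e.
Proof. by move=> H; rewrite mem_monos; apply/forallP => i; rewrite H. Qed.

Lemma uniq_monos e : uniq (monos blk e).
Proof. by rewrite (map_inj_uniq val_inj) filter_uniq // enum_uniq. Qed.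

Definition S (rows : seq poly) (p : poly) :=
  exists c : nat -> K, p = \sum_(j < size rows) c j *: rows`_j.

Lemma in_spanE rows p : in_span rows p <-> S rows p.
Proof.
split => [[c ->]|[c ->]]; last by exists (fun j => c j).
exists (fun n => if insub n is Some j then c j else 0).
apply: eq_bigr => j _. by rewrite valK.
Qed.

Lemma S0 rows : S rows 0.
Proof. by exists (fun _ => 0); rewrite big1 // => j _; rewrite scale0r. Qed.

Lemma SD rows p q : S rows p -> S rows q -> S rows (p + q).
Proof.
move=> [c1 ->] [c2 ->]; exists (fun j => c1 j + c2 j).
by rewrite -big_split; apply: eq_bigr => j _; rewrite scalerDl.
Qed.

Lemma SZ rows a p : S rows p -> S rows (a *: p).
Proof.
move=> [c ->]; exists (fun j => a * c j).
by rewrite scaler_sumr; apply: eq_bigr => j _; rewrite scalerA.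
Qed.

Lemma SN rows p : S rows p -> S rows (- p).
Proof. by move=> h; rewrite -scaleN1r; apply: SZ. Qed.

Lemma Ssum rows (I : Type) (s : seq I) (P : pred I) (F : I -> poly) :
  (forall i, P i -> S rows (F i)) -> S rows (\sum_(i <- s | P i) F i).
Proof. move=> H; elim/big_ind: _ => //; [exact: S0 | exact: SD]. Qed.

Lemma Srow rows x : x \in rows -> S rows x.
Proof.
move=> xin; exists (fun j => (j == index x rows)%:R).
have ix : (index x rows < size rows)%N by rewrite index_mem.
rewrite (bigD1 (Ordinal ix)) //= eqxx scale1r nth_index //.
rewrite big1 ?addr0 // => j /negbTE; rewrite -val_eqE /= => ->; by rewrite scale0r.
Qed.

Lemma Scatl s t p : S s p -> S (s ++ t) p.
Proof.
move=> [c ->]; exists (fun j => if (j < size s)%N then c j else 0).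
rewrite size_cat big_split_ord /= [X in _ = _ + X]big1 ?addr0.
  by apply: eq_bigr => j _; rewrite ltn_ord nth_cat ltn_ord.
by move=> j _; rewrite ltnNge leq_addr /= scale0r.
Qed.

Lemma Scatr s t p : S t p -> S (s ++ t) p.
Proof.
move=> [c ->]; exists (fun j => if (j < size s)%N then 0 else c (j - size s)%N).
rewrite size_cat big_split_ord /= [X in _ = X + _]big1 ?add0r.
  by apply: eq_bigr => j _; rewrite ltnNge leq_addr /= nth_cat ltnNge leq_addr /= addKn.
by move=> j _; rewrite ltn_ord scale0r.
Qed.

Lemma S_closed (Q : poly -> Prop) rows p :
  Q 0 -> (forall x y, Q x -> Q y -> Q (x + y)) -> (forall a x, Q x -> Q (a *: x)) ->
  (forall x, x \in rows -> Q x) -> S rows p -> Q p.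
Proof.
move=> Q0 QD QZ Qr [c ->]; elim/big_ind: _ => // j _.
by apply: QZ; apply: Qr; apply: mem_nth.
Qed.

Lemma S_hom e rows p : (forall x, x \in rows -> hom e x) -> S rows p -> hom e p.
Proof.
move=> H; apply: S_closed => //; [exact: hom0 | exact: homD | move=> a x; exact: homZ].
Qed.


Lemma decideP (P : Prop) : reflect P (decide P).
Proof. by rewrite /decide; case: excluded_middle_informative => h; constructor. Qed.

Lemma count_ltP (T : eqType) (P Q : pred T) (s : seq T) x :
  (forall y, P y -> Q y) -> x \in s -> Q x -> ~~ P x -> (count P s < count Q s)%N.
Proof.
move=> H; elim: s => //= y s IH; rewrite inE => /orP[/eqP <-|xs] Qx nPx.
  by rewrite (negbTE nPx) Qx add0n add1n ltnS; apply: sub_count.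
rewrite -addnS; apply: leq_add; last exact: IH.
by case: (P y) (H y) => // ->.
Qed.

Variable (lt : rel 'X_{1..N}).
Hypothesis (Hlt : monomial_order lt).

Local Notation M := (M3H_rev blk lt).

Lemma rows_form rfs e x : x \in M rfs e ->
  exists g b, [/\ g \in rfs, b \in monos blk (subv e (@pdeg K N r blk g)) & x = 'X_[b] * g].
Proof.
elim: rfs e => [|f rfs IH] e //=; rewrite mem_cat => /orP[/IH [g [b [h1 h2 ->]]]| /mapP [b]].
  by exists g, b; split => //; rewrite inE h1 orbT.
by rewrite mem_filter => /andP[_ hb] ->; exists f, b; split => //; rewrite inE eqxx.
Qed.

Lemma rows_hom rfs e x : (forall f, f \in rfs -> hom (@pdeg K N r blk f) f) ->
  x \in M rfs e -> hom e x.
Proof.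
move=> Hh /rows_form [g [b [hg hb ->]]].
apply: (homM (homX (mem_monosP hb)) (Hh g hg)) => i.
by rewrite /subv subrK.
Qed.

Definition Pspan rfs := forall e f, f \in rfs -> forall m,
  m \in monos blk (subv e (@pdeg K N r blk f)) -> S (M rfs e) ('X_[m] * f).

Lemma mul_span rfs : Pspan rfs -> forall e f h, f \in rfs ->
  hom (subv e (@pdeg K N r blk f)) h -> S (M rfs e) (h * f).
Proof.
move=> HP e f h hf hh; rewrite {1}(mpolyE h) mulr_suml big_seq; apply: Ssum => m hm.
rewrite -scalerAl; apply: SZ; apply: HP => //; apply: mem_monosI; exact: hh.
Qed.

Lemma span_mono rfs : (forall f, f \in rfs -> hom (@pdeg K N r blk f) f) -> Pspan rfs.
Proof.
case: Hlt => Hirr Htr Htot _ _.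
elim: rfs => [|f0 rfs IH] Hh e f //.
have Hh' : forall f, f \in rfs -> hom (@pdeg K N r blk f) f.
  by move=> g hg; apply: Hh; rewrite inE hg orbT.
have IH' := IH Hh'.
case: (boolP (f \in rfs)) => [hf _ m hm | hf].
  by rewrite /=; apply: Scatl; apply: IH'.
rewrite inE (negbTE hf) orbF => /eqP -> {f hf}.
set e' := subv e (@pdeg K N r blk f0).
suff: forall n m, m \in monos blk e' -> (count (lt^~ m) (monos blk e') < n)%N ->
   S (M (f0 :: rfs) e) ('X_[m] * f0).
  by move=> H m hm; apply: (H _ m hm).
elim => [//|n IHn] m hm hc.
rewrite /=.
case: (decideP (LMset lt (M rfs e') m)) => [[p [sp pn0 [pm pLM]]] | nL]; last first.
  apply: Scatr; apply: Srow; apply/mapP; exists m => //; rewrite mem_filter hm andbT.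
  by apply/negP => /decideP.
move/in_spanE: sp => sp.
set lc := p@_m.
have lc0 : lc != 0 by rewrite -mcoeff_msupp.
have E : 'X_[m] * f0 = lc^-1 *: (p * f0) + ('X_[m] - lc^-1 *: p) * f0.
  by rewrite mulrBl -scalerAl addrC subrK.
rewrite E; apply: SD.
  apply: SZ; apply: Scatl.
  apply: (S_closed (Q := fun x => S (M rfs e) (x * f0))) sp.
  - by rewrite mul0r; apply: S0.
  - by move=> x y hx hy; rewrite mulrDl; apply: SD.
  - by move=> a x hx; rewrite -scalerAl; apply: SZ.
  move=> x /rows_form [g [b [hg hb ->]]].
  rewrite mulrAC; apply: (mul_span IH') => //.
  apply: (homM (homX (mem_monosP hb)) (Hh f0 (mem_head _ _))) => i.
  by rewrite /subv addrAC subrK.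
set q := 'X_[m] - lc^-1 *: p.
have hp : hom e' p by apply: (S_hom _ sp) => x; apply: rows_hom.
have hq : hom e' q by apply: homB; [apply: homX; apply: mem_monosP | apply: homZ].
have qm : q@_m = 0 by rewrite mcoeffB mcoeffX eqxx mcoeffZ mulVf // subrr.
rewrite {1}(mpolyE q) mulr_suml big_seq; apply: Ssum => m' hm'.
rewrite -scalerAl; apply: SZ.
have hm'e : m' \in monos blk e' by apply: mem_monosI; apply: hq.
have nm : m' != m by apply/eqP => E'; move: hm'; rewrite E' mcoeff_msupp qm eqxx.
have ltm : lt m' m.
  move: (hm') => /msuppB_le; rewrite mem_cat msuppX inE (negbTE nm) /=.
  by move/msuppZ_le => h; apply: pLM.
apply: IHn => //.
rewrite ltnS in hc; apply: (leq_trans _ hc).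
apply: (count_ltP (x := m')) => //; last by rewrite Hirr.
by move=> y /= hy; apply: Htr hy ltm.
Qed.


Lemma mcoeff_sumL (I : Type) (s : seq I) (P : pred I) (F : I -> poly) m :
  (\sum_(i <- s | P i) F i)@_m = \sum_(i <- s | P i) (F i)@_m.
Proof. by apply: (big_morph (mcoeff m)) => [x y|]; rewrite ?mcoeffD ?mcoeff0. Qed.

Lemma hom_pdeg f D : f != 0 -> hom D f -> hom (@pdeg K N r blk f) f.
Proof.
move=> f0 hf m hm i; rewrite (hf _ hm) /pdeg (hf _ (mlead_supp f0)) //.
Qed.

Lemma seq_max (s : seq 'X_{1..N}) : s != [::] ->
  exists2 m, m \in s & forall m', m' \in s -> m' != m -> lt m' m.
Proof.
case: Hlt => Hirr Htr Htot _ _.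
elim: s => [//|x s IH] _.
case: (eqVneq s [::]) => [->|sn].
  by exists x; [exact: mem_head | move=> m'; rewrite inE => /eqP ->; rewrite eqxx].
have [m1 hm1 H1] := IH sn.
case: (eqVneq x m1) => [Ex|nx]; first subst m1.
  exists x; first exact: mem_head.
  by move=> m'; rewrite inE => /orP[/eqP->|hm']; [rewrite eqxx | exact: H1].
case/orP: (Htot _ _ nx) => [lx|lm].
  exists m1; first by rewrite inE hm1 orbT.
  by move=> m'; rewrite inE => /orP[/eqP->//|]; exact: H1.
exists x; first exact: mem_head.
move=> m'; rewrite inE => /orP[/eqP->|hm' nm']; first by rewrite eqxx.
case: (eqVneq m' m1) => [->//|n1].
exact: Htr (H1 _ hm' n1) lm.
Qed.

Lemma LM_exists (p : poly) : p != 0 -> exists m, is_LM lt p m.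
Proof.
move=> p0; have [|m hm H] := seq_max (s := msupp p); first by rewrite msupp_eq0.
by exists m; split.
Qed.

Lemma ideal_of_span (fs : seq poly) d p : S (M (rev fs) d) p ->
  exists h : nat -> poly,
    (forall l, (l < size fs)%N -> hom (subv d (@pdeg K N r blk fs`_l)) (h l)) /\
    p = \sum_(l < size fs) h l * fs`_l.
Proof.
move=> Sp; pattern p; refine (S_closed _ _ _ _ Sp).
- exists (fun _ => 0); split; first by move=> l _; apply: hom0.
  by rewrite big1 // => l _; rewrite mul0r.
- move=> x y [h1 [hh1 ->]] [h2 [hh2 ->]]; exists (fun l => h1 l + h2 l); split.
    by move=> l hl; apply: homD; [apply: hh1 | apply: hh2].
  by rewrite -big_split; apply: eq_bigr => l _; rewrite mulrDl.
- move=> a x [h [hh ->]]; exists (fun l => a *: h l); split.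
    by move=> l hl; apply: homZ; apply: hh.
  by rewrite scaler_sumr; apply: eq_bigr => l _; rewrite scalerAl.
move=> x /rows_form [g [b [hg hb ->]]]; rewrite mem_rev in hg.
have il : (index g fs < size fs)%N by rewrite index_mem.
exists (fun l => if l == index g fs then 'X_[b] else 0); split.
  move=> l _; case: eqP => [->|_]; last exact: hom0.
  by apply: homX; rewrite nth_index //; apply: mem_monosP.
rewrite (bigD1 (Ordinal il)) //= eqxx nth_index // big1 ?addr0 //.
by move=> l /negbTE; rewrite -val_eqE /= => ->; rewrite mul0r.
Qed.

Lemma H1_use (fs : seq poly) fk d g (h : nat -> poly) :
  H1_vanishes blk (rcons fs fk) d ->
  hom (subv d (@pdeg K N r blk fk)) g ->
  (forall l, (l < size fs)%N -> hom (subv d (@pdeg K N r blk fs`_l)) (h l)) ->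
  g * fk = \sum_(l < size fs) h l * fs`_l ->
  exists k : nat -> poly, g = \sum_(l < size fs) k l * fs`_l.
Proof.
move=> H1 hg hh Eh.
pose gH (j : 'I_(size (rcons fs fk))) := if (nat_of_ord j < size fs)%N then h j else - g.
have jo : (size fs < size (rcons fs fk))%N by rewrite size_rcons.
have hyp1 : forall j : 'I_(size (rcons fs fk)),
    hom (subv d (@pdeg K N r blk (rcons fs fk)`_j)) (gH j).
  move=> j; rewrite /gH; case: ifP => hj.
 by rewrite nth_rcons ifT //; apply: hh.
  have Ej : val j = size fs.
    have hj2 : (j <= size fs)%N by rewrite -ltnS -(size_rcons fs fk) ltn_ord.
    by apply/eqP; rewrite eqn_leq hj2 /= leqNgt; apply/negbT; exact: hj.
  by rewrite nth_rcons Ej ltnn eqxx; apply: homN.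
have hyp2 : \sum_(j < size (rcons fs fk)) gH j * (rcons fs fk)`_j = 0.
  have -> : \sum_(j < size (rcons fs fk)) gH j * (rcons fs fk)`_j =
     \sum_(0 <= j < size (rcons fs fk)) (if (j < size fs)%N then h j else - g) * (rcons fs fk)`_j.
    by rewrite big_mkord.
  rewrite size_rcons big_nat_recr //= ltnn nth_rcons ltnn eqxx big_mkord.
  rewrite (eq_bigr (fun l : 'I_(size fs) => h l * fs`_l)) => [|l _]; last first.
    by rewrite ltn_ord nth_rcons ltn_ord.
  by rewrite -Eh mulNr subrr.
have [hh2 [Hd Has Hj]] := H1 gH hyp1 hyp2.
have := Hj (Ordinal jo); rewrite /gH /= ltnn => Eg.
exists (fun l => if insub l is Some o then - hh2 o (Ordinal jo) else 0).
rewrite -[g]opprK Eg -sumrN.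
pose F l := if insub l is Some o then - (hh2 o (Ordinal jo) * (rcons fs fk)`_o) else 0.
have -> : \sum_(i < size (rcons fs fk)) - (hh2 i (Ordinal jo) * (rcons fs fk)`_i) =
          \sum_(0 <= l < size (rcons fs fk)) F l.
  by rewrite big_mkord; apply: eq_bigr => o _; rewrite /F valK.
rewrite {1}size_rcons big_nat_recr //= {2}/F.
case: insubP => [o _ Eo|nP]; last by rewrite jo in nP.
have -> : o = Ordinal jo by apply: val_inj.
rewrite Hd mul0r oppr0 addr0 big_mkord; apply: eq_bigr => l _.
rewrite /F; case: insubP => [o' _ Eo'|]; last by rewrite mul0r.
by rewrite mulNr nth_rcons Eo' ltn_ord.
Qed.

Lemma proj_span (fs : seq poly) e g (k : nat -> poly) :
  (forall f, f \in fs -> hom (@pdeg K N r blk f) f) -> hom e g ->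
  g = \sum_(l < size fs) k l * fs`_l -> S (M (rev fs) e) g.
Proof.
move=> Hh hg Ek.
have Hh' : forall f, f \in rev fs -> hom (@pdeg K N r blk f) f.
  by move=> f; rewrite mem_rev; apply: Hh.
pose P (l : nat) := \sum_(m <- monos blk (subv e (@pdeg K N r blk fs`_l))) (k l)@_m *: 'X_[m].
have hP l : hom (subv e (@pdeg K N r blk fs`_l)) (P l).
  rewrite /P big_seq; apply: hom_sum => m hm; apply: homZ; apply: homX.
  exact: mem_monosP.
have aP l : anti (subv e (@pdeg K N r blk fs`_l)) (k l - P l).
  move=> m hm; rewrite mcoeffB /P (raddf_sum (mcoeff m)).
  rewrite (bigD1_seq m) ?uniq_monos //=; last exact: mem_monosI.
  rewrite mcoeffZ mcoeffX eqxx mulr1 big1 ?addr0 ?subrr // => m' nm'.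
  by rewrite mcoeffZ mcoeffX (negbTE nm') mulr0.
have hf l : (l < size fs)%N -> hom (@pdeg K N r blk fs`_l) fs`_l.
  by move=> hl; apply: Hh; apply: mem_nth.
have Eg : g = \sum_(l < size fs) P l * fs`_l.
  apply/eqP; rewrite -subr_eq0; apply/eqP; apply: (@hom_anti0 e).
    apply: homB => //; apply: hom_sum => l _.
    by apply: (homM (hP l) (hf l (ltn_ord l))) => i; rewrite /subv subrK.
  rewrite {1}Ek -sumrB; apply: anti_sum => l _; rewrite -mulrBl.
  by apply: (antiM (aP l) (hf l (ltn_ord l))) => i; rewrite /subv subrK.
rewrite Eg; apply: Ssum => l _.
apply: (mul_span (span_mono Hh')); first by rewrite mem_rev; apply: mem_nth.
exact: hP.
Qed.


Lemma main_aux (fs : seq poly) fk d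
  (Hh : forall f, f \in rcons fs fk -> hom (@pdeg K N r blk f) f)
  (H1 : H1_vanishes blk (rcons fs fk) d) i :
  (size (M3H blk fs d lt) <= i < size (M3H blk (rcons fs fk) d lt))%N ->
  row_indep_of_others (M3H blk (rcons fs fk) d lt) i.
Proof.
move=> /andP[hi1 hi2] [c Hc].
have [c' Hc'] : exists c' : nat -> K, (M3H blk (rcons fs fk) d lt)`_i =
   \sum_(j < size (M3H blk (rcons fs fk) d lt) | val j != i) c' j *: (M3H blk (rcons fs fk) d lt)`_j.
  exists (fun n => if insub n is Some j then c j else 0); rewrite Hc.
  by apply: eq_bigr => j _; rewrite valK.
clear c Hc.
have Hhfs : forall f, f \in fs -> hom (@pdeg K N r blk f) f.
  by move=> f hf; apply: Hh; rewrite mem_rcons inE hf orbT.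
have Hhk : hom (@pdeg K N r blk fk) fk by apply: Hh; rewrite mem_rcons mem_head.
set e := subv d (@pdeg K N r blk fk).
set A := M3H blk fs d lt.
set B := [seq b <- monos blk e | ~~ decide (LMset lt (M3H blk fs e lt) b)].
set T := [seq 'X_[b] * fk | b <- B].
have ER : M3H blk (rcons fs fk) d lt = A ++ T by rewrite /M3H rev_rcons.
move: Hc' hi2; rewrite ER size_cat => Hc' hi2.
have sTB : size T = size B by rewrite size_map.
set t := (i - size A)%N.
have Ei : i = (size A + t)%N by rewrite subnKC.
have ht : (t < size B)%N by rewrite -sTB -(ltn_add2l (size A)) -Ei.
set beta := nth 0%MM B t.
have Ri : (A ++ T)`_i = 'X_[beta] * fk.
  by rewrite nth_cat ltnNge hi1 /= (nth_map 0%MM).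
set G := \sum_(j < size B | nat_of_ord j != t) c' (size A + j)%N *: 'X_[nth 0%MM B j].
have [a [sa Ea]] : exists a, S A a /\ 'X_[beta] * fk = a + G * fk.
  rewrite -Ri Hc' big_split_ord /=; eexists; split; last first.
    congr (_ + _); rewrite /G mulr_suml sTB; apply: eq_big => j.
      by rewrite Ei eqn_add2l.
    by move=> _; rewrite nth_cat ltnNge leq_addr /= addKn (nth_map 0%MM) // -scalerAl.
  apply: Ssum => j _; apply: SZ; rewrite nth_cat ltn_ord; apply: Srow; apply: mem_nth.
  exact: ltn_ord.
set g := 'X_[beta] - G.
have Eg : g * fk = a by rewrite mulrBl Ea addrK.
have [h [hh Eh]] := ideal_of_span (sa : S (M (rev fs) d) a).
have hbeta : beta \in B by apply: mem_nth.
have hBm : forall j, (j < size B)%N -> nth 0%MM B j \in monos blk e.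
  by move=> j hj; have := mem_nth 0%MM hj; rewrite mem_filter => /andP[].
have hg : hom e g.
  apply: homB; first by apply: homX; apply: mem_monosP; apply: hBm.
  by apply: hom_sum => j _; apply: homZ; apply: homX; apply: mem_monosP; apply: hBm.
have [k Ek] := H1_use H1 hg hh (etrans Eg Eh).
have sg := proj_span Hhfs hg Ek.
have uB : uniq B by rewrite filter_uniq // uniq_monos.
have cG : forall m', (m' \notin B) || (m' == beta) -> G@_m' = 0.
  move=> m' hm'; rewrite /G mcoeff_sumL big1 // => j hj.
  rewrite mcoeffZ mcoeffX; case/orP: hm' => [nB|/eqP->].
    case: eqP => [E|_]; last by rewrite mulr0.
    by move: nB; rewrite -E mem_nth.
  by rewrite /beta nth_uniq // (negbTE hj) mulr0.
have g0 : g != 0.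
  apply/eqP => g0; have := congr1 (mcoeff beta) g0.
  rewrite mcoeffB mcoeffX eqxx cG ?eqxx ?orbT // subr0 mcoeff0 => /eqP.
  by rewrite oner_eq0.
have [m0 Hm0] := LM_exists g0; case: (Hm0) => m0s _.
have m0B : m0 \in B.
  apply/negPn/negP => nB; move: m0s; rewrite mcoeff_msupp mcoeffB mcoeffX.
  have nb : beta != m0 by apply/eqP => E; rewrite -E hbeta in nB.
  by rewrite (negbTE nb) cG ?nB // subr0 eqxx.
move: m0B; rewrite mem_filter => /andP[/negP nd _]; apply: nd; apply/decideP.
by exists g; split => //; apply/in_spanE; exact: sg.
Qed.

End Aux.

Theorem mainTheorem17
  (K : fieldType) (charK0 : [pchar K] =i pred0)
  (N r : nat) (blk : 'I_N -> 'I_r) (blk_surj : forall i : 'I_r, exists v, blk v = i)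
  (fs : seq {mpoly K[N]}) (fk : {mpoly K[N]})
  (fs_ok : forall f, f \in rcons fs fk ->
             f != 0 /\ exists D : 'I_r -> int, mhomog blk D f)
  (lt : rel 'X_{1..N}) (lt_mo : monomial_order lt)
  (d : 'I_r -> int)
  (H1 : H1_vanishes blk (rcons fs fk) d) :
  forall i : nat,
    (size (M3H blk fs d lt) <= i < size (M3H blk (rcons fs fk) d lt))%N ->
    row_indep_of_others (M3H blk (rcons fs fk) d lt) i.
Proof.
apply: (main_aux lt_mo) => // f hf.
have [f0 [D hD]] := fs_ok f hf.
exact: hom_pdeg f0 hD.
Qed.
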